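(* Let $F:\mathbb{R}^d\to\mathbb{R}$ be Lipschitz continuous with constant $L_0$, i.e. $|F(\theta_1)-F(\theta_2)|\le L_0\|\theta_1-\theta_2\|$ for all $\theta_1,\theta_2$. For $\eta>0$ define the Gaussian smoothing $$F_\eta(\theta)=\frac{1}{(2\pi)^{d/2}}\int_{\mathbb{R}^d}F(\theta+\eta v)\,e^{-\frac12\|v\|^2}\,dv=\mathbb{E}_v[F(\theta+\eta v)],$$ where $v\sim\mathcal{N}(0,I_d)$; $F_\eta$ is differentiable with $\nabla F_\eta(\theta)=\mathbb{E}_v\!\left[\frac{F(\theta+\eta v)-F(\theta)}{\eta}\,v\right]$. Then for any $\eta_1,\eta_2>0$ and any $\theta\in\mathbb{R}^d$, $$\|\nabla F_{\eta_2}(\theta)-\nabla F_{\eta_1}(\theta)\|\le\frac{2L_0\,d\,|\eta_2-\eta_1|}{\eta_2}.$$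
   Context: $\|\cdot\|$ denotes the Euclidean norm on $\mathbb{R}^d$, and $v$ is a standard Gaussian random vector in $\mathbb{R}^d$ (mean zero, identity covariance). *)

(* Defs.v *)
From HB Require Import structures.
From mathcomp Require Import all_boot all_order all_algebra.
From mathcomp Require Import all_classical all_reals all_analysis.
Set Implicit Arguments. Unset Strict Implicit. Unset Printing Implicit Defensive.
Import Order.TTheory GRing.Theory Num.Theory.
Import numFieldNormedType.Exports.
Local Open Scope ring_scope.

Definition eucl_norm (R : realType) (d : nat) (x : 'rV[R]_d) : R :=
  Num.sqrt (\sum_(i < d) x ord0 i ^+ 2).

(* Expectation E_v[g v] for v ~ N(0, I_n), written as the iterated Lebesgue
   integral against the standard normal density in each coordinate
   (i.e. (2 pi)^{-n/2} \int g(v) exp(-|v|^2/2) dv, by Fubini).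
   Coordinates are accumulated in a function nat -> R: coordinate 0 is
   integrated outermost. *)
Fixpoint gaussE_rec (R : realType) (n : nat) (g : (nat -> R) -> R) : R :=
  match n with
  | 0 => g (fun _ => 0)
  | n'.+1 =>
      \int[@lebesgue_measure R]_x
        (normal_pdf 0 1 x *
         gaussE_rec n' (fun w => g (fun k => if k is k'.+1 then w k' else x)))
  end.

Definition gaussE (R : realType) (d : nat) (g : 'rV[R]_d -> R) : R :=
  gaussE_rec d (fun w => g (\row_(i < d) w (nat_of_ord i))).

Definition smooth_grad (R : realType) (d : nat) (F : 'rV[R]_d -> R)
    (eta : R) (theta : 'rV[R]_d) : 'rV[R]_d :=
  \row_(i < d) gaussE (fun v => (F (theta + eta *: v) - F theta) / eta * v ord0 i).

(* Main.v *)
Require Import Defs.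
From HB Require Import structures.
From mathcomp Require Import all_boot all_order all_algebra.
From mathcomp Require Import all_classical all_reals all_analysis.
From mathcomp Require Import measurable_realfun.
From mathcomp Require Import ring lra.
Set Implicit Arguments. Unset Strict Implicit. Unset Printing Implicit Defensive.
Import Order.TTheory GRing.Theory Num.Theory.
Import numFieldNormedType.Exports.
Local Open Scope classical_set_scope.
Local Open Scope ring_scope.
Section Moment.
Context {R : realType}.
Notation mu := (@lebesgue_measure R).
Notation phi := (@normal_pdf R 0 1).

Definition ex (x : R) := expR (- x ^+ 2 / 2).

Lemma phiE x : phi x = normal_peak 1 * ex x.
Proof.
by rewrite normal_pdfE ?oner_neq0 // /normal_fun subr0 expr1n.
Qed.

Lemma d_inner (x : R) : is_derive x (1:R) (fun y : R => - y ^+ 2 / 2) (- x).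
Proof.
apply: is_derive_eq.
rewrite !scaler0 add0r.
have sc : forall a b : R, a *: b = a * b by [].
by rewrite !sc mulr1; field.
Qed.


Lemma d_ex (x : R) : is_derive x (1:R) ex (- x * ex x).
Proof.
have := @is_derive1_comp R expR (fun y : R => - y ^+ 2 / 2) x _ _ (is_derive_expR (- x ^+ 2 / 2)) (d_inner x).
by rewrite mulrC.
Qed.

Lemma d_psi (x : R) : is_derive x (1:R) (fun y => y * ex y) ((1 - x ^+ 2) * ex x).
Proof.
have := is_deriveM (is_derive_id x (1:R)) (d_ex x).
move=> h; apply: is_derive_eq.
have sc : forall a b : R, a *: b = a * b by [].
rewrite -[(ex x)%:A]/(ex x *: 1) !sc; ring.
Qed.


Lemma inv_cvg0 : (fun x : R => x^-1) @ +oo --> (0:R).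
Proof.
apply/cvgrVy; first by near=> x; rewrite invr_gt0.
have -> : unstable.inv_fun [eta GRing.inv] = (id : R -> R).
  by apply/funext => x; rewrite /unstable.inv_fun /= invrK.
exact: cvg_id.
Unshelve. all: by end_near.
Qed.

Lemma psi_cvg0 : (fun x : R => x * ex x) @ +oo --> (0:R).
Proof.
apply: (@squeeze_cvgr _ _ _ _ (fun=> 0) (fun x => 2 * x^-1)).
- near=> x.
  have x0 : 0 < x by near: x; exact: nbhs_pinfty_gt.
  apply/andP; split; first by apply: mulr_ge0; [exact: ltW|exact: expR_ge0].
  rewrite /ex mulNr expRN.
  have E0 : 0 < expR (x ^+ 2 / 2) := expR_gt0 _.
  have E1 := expR_ge1Dx (x ^+ 2 / 2).
  rewrite ler_pdivrMr // mulrAC ler_pdivlMr //.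
  nra.
- exact: cvg_cst.
- rewrite -[X in _ --> X](mulr0 (2:R)); apply: cvgMr; exact: inv_cvg0.
Unshelve. all: by end_near.
Qed.


Notation p := (normal_peak (1:R)).

Lemma phi_ge0' x : 0 <= phi x.
Proof. exact: normal_pdf_ge0. Qed.

Lemma phi_cont' : continuous phi.
Proof. exact: continuous_normal_pdf (oner_neq0 R). Qed.

Lemma poly_cont (c : R) : continuous (fun x : R => x ^+ 2 - c).
Proof.
move=> x; apply: cvgB; last exact: cvg_cst.
exact: exprn_continuous.
Qed.

Lemma cont_f1 : continuous (fun x : R => (x ^+ 2 - 1) * phi x).
Proof.
move=> x.
have := @continuousM R R (fun y => y ^+ 2 - 1) phi x (@poly_cont 1 x) (@phi_cont' x).
by [].
Qed.

Lemma cont_f2 : continuous (fun x : R => (1 - x ^+ 2) * phi x).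
Proof.
move=> x.
have h1 : {for x, continuous (fun y : R => 1 - y ^+ 2)}.
  apply: cvgB; first exact: cvg_cst.
  exact: exprn_continuous.
have := @continuousM R R (fun y => 1 - y ^+ 2) phi x h1 (@phi_cont' x).
by [].
Qed.

Definition Fp (x : R) := p * (x * ex x).

Lemma dFp (x : R) : is_derive x (1:R) Fp ((1 - x ^+ 2) * phi x).
Proof.
have h := d_psi x.
rewrite phiE /Fp; apply: is_derive_eq.
have sc : forall a b : R, a *: b = a * b by [].
rewrite !sc; ring.
Qed.

Lemma dFn (x : R) : is_derive x (1:R) (fun y => - Fp y) ((x ^+ 2 - 1) * phi x).
Proof.
have h := dFp x.
apply: is_derive_eq; ring.
Qed.

Lemma Fp_cont : continuous Fp.
Proof.
move=> x; apply: differentiable_continuous; apply/derivable1_diffP.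
have h := dFp x. by [].
Qed.

Lemma FTC_tail : (\int[mu]_(x in `[1%R, +oo[) ((x ^+ 2 - 1) * phi x)%:E)%E = (Fp 1)%:E.
Proof.
rewrite (@ge0_continuous_FTC2y R _ (fun y => - Fp y) 1 0).
- by rewrite sub0e EFinN oppeK.
- move=> x x1; apply: mulr_ge0; last exact: phi_ge0'.
  rewrite subr_ge0; nra.
- apply: continuous_subspaceT; exact: cont_f1.
- rewrite -[X in _ --> X]oppr0 -[X in _ --> - X](mulr0 p).
  apply: cvgN; apply: cvgMr; exact: psi_cvg0.
- move=> x _; have h := dFn x; by [].
- apply: cvg_at_right_filter; apply: cvgN; exact: Fp_cont.
- move=> x _; have h := dFn x; rewrite derive1E; exact: derive_val.
Qed.

Lemma FTC_head : (\int[mu]_(x in `[0%R, 1%R]) ((1 - x ^+ 2) * phi x)%:E)%E = (Fp 1)%:E.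
Proof.
rewrite (@continuous_FTC2 R _ Fp 0 1) //.
- by rewrite /Fp mul0r mulr0 sube0.
- apply: continuous_subspaceT; exact: cont_f2.
- split.
  + move=> x _; have h := dFp x; by [].
  + apply: cvg_at_right_filter; exact: Fp_cont.
  + apply: cvg_at_left_filter; exact: Fp_cont.
- move=> x _; have h := dFp x; rewrite derive1E; exact: derive_val.
Qed.


Lemma mfun_cont (h : R -> R) (A : set R) : continuous h -> measurable A ->
  measurable_fun A (fun x => (h x)%:E).
Proof.
move=> ch mA; apply: measurable_funTS.
apply/measurable_EFinP; exact: continuous_measurable_fun.
Qed.

Lemma split0 (h : R -> R) : (forall x, 0 <= h x) -> continuous h ->
  (\int[mu]_(x in [set x : R | (0 <= x)%R]) (h x)%:E =
   \int[mu]_(x in `[0%R, 1%R]) (h x)%:E + \int[mu]_(x in `[1%R, +oo[) (h x)%:E)%E.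
Proof.
move=> h0 ch.
rewrite -set_itvcy (@itv_bndbnd_setU _ _ _ (BRight (1:R))) //; last first.
  by rewrite bnd_simp.
rewrite ge0_integral_setU //=.
- by rewrite integral_itv_obnd_cbnd //; exact: mfun_cont.
- by apply: mfun_cont => //; exact: measurableU.
- by move=> x _; rewrite lee_fin.
- apply/disj_setPS => x [] /=; rewrite !in_itv /= => /andP[_ x1] /andP[x1' _].
  by move: x1; rewrite leNgt x1'.
Qed.


Lemma phi_even x : phi (- x) = phi x.
Proof. by rewrite !phiE /ex sqrrN. Qed.

Lemma cont_g : continuous (fun x : R => x ^+ 2 * phi x).
Proof.
move=> x.
have := @continuousM R R (fun y => y ^+ 2) phi x (@exprn_continuous R 2 x) (@phi_cont' x).
by [].
Qed.

Lemma m2_E : (\int[mu]_x ((x ^+ 2 * phi x)%:E) = 1)%E.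
Proof.
have g0 : forall x : R, 0 <= x ^+ 2 * phi x by move=> x; rewrite mulr_ge0 ?sqr_ge0 ?phi_ge0'.
have mI (A : set R) (h : R -> R) : continuous h -> measurable A -> measurable_fun A (fun x => (h x)%:E).
  by move=> ch mA; exact: mfun_cont.
rewrite ge0_symfun_integralT //; last 2 first.
  exact: cont_g.
  by move=> x /=; rewrite sqrrN phi_even.
rewrite split0 //; last exact: cont_g.
have e1 : (\int[mu]_(x in `[1%R, +oo[) (x ^+ 2 * phi x)%:E =
    \int[mu]_(x in `[1%R, +oo[) (phi x)%:E + (Fp 1)%:E)%E.
  rewrite -FTC_tail -ge0_integralD //; last 4 first.
  - by move=> x _; rewrite lee_fin phi_ge0'.
  - exact: mI phi_cont' _.
  - move=> x; rewrite /= in_itv /= andbT => x1; rewrite lee_fin mulr_ge0 ?phi_ge0' //.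
    rewrite subr_ge0; nra.
  - exact: mI cont_f1 _.
  apply: eq_integral => x _; rewrite -EFinD; congr EFin; ring.
have e0 : (\int[mu]_(x in `[0%R, 1%R]) (phi x)%:E =
    \int[mu]_(x in `[0%R, 1%R]) (x ^+ 2 * phi x)%:E + (Fp 1)%:E)%E.
  rewrite -FTC_head -ge0_integralD //; last 4 first.
  - by move=> x _; rewrite lee_fin.
  - exact: mI cont_g _.
  - move=> x; rewrite /= in_itv /= => /andP[x0 x1]; rewrite lee_fin mulr_ge0 ?phi_ge0' //.
    rewrite subr_ge0; nra.
  - exact: mI cont_f2 _.
  apply: eq_integral => x _; rewrite -EFinD; congr EFin; ring.
rewrite e1 [X in (_ + X)%E]addeC addeA -e0 -split0 //; last exact: phi_cont'.
rewrite -ge0_symfun_integralT //; [exact: integral_normal_pdf|exact: phi_ge0'|exact: phi_cont'|by move=> x /=; rewrite phi_even].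
all: by move=> x; exact: phi_ge0'.
Qed.


Lemma m2_int : mu.-integrable setT (EFin \o (fun x => x ^+ 2 * phi x)).
Proof.
apply/integrableP; split.
  by apply/measurable_EFinP; apply: continuous_measurable_fun; exact: cont_g.
have -> : (\int[mu]_x `|(EFin \o (fun x : R => (x ^+ 2 * phi x)%R)) x|)%E =
           (\int[mu]_x (((x ^+ 2 * phi x)%R)%:E))%E.
  apply: eq_integral => x _ /=; rewrite ger0_norm //.
  by rewrite mulr_ge0 ?sqr_ge0 ?phi_ge0'.
by rewrite m2_E ltry.
Qed.

Lemma m2_R1 : \int[mu]_x (x ^+ 2 * phi x) = 1.
Proof. by rewrite /Rintegral m2_E. Qed.

End Moment.

Section OneD.
Context {R : realType}.
Notation mu := (@lebesgue_measure R).
Notation phi := (@normal_pdf R 0 1).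

Lemma phi_ge0 x : 0 <= phi x.
Proof. exact: normal_pdf_ge0. Qed.

Lemma phi_cont : continuous phi.
Proof. exact: continuous_normal_pdf (oner_neq0 R). Qed.

Lemma phi_int : mu.-integrable setT (EFin \o phi).
Proof. exact: integrable_normal_pdf. Qed.

Lemma phi_R1 : \int[mu]_x phi x = 1.
Proof. by rewrite /Rintegral integral_normal_pdf. Qed.

Lemma phiZ_int A : mu.-integrable setT (EFin \o (fun x => A * phi x)).
Proof.
have H := integrableZl measurableT A phi_int.
by apply: (eq_integrable _ _ _ _ H).
Qed.

Lemma m2Z_int B : mu.-integrable setT (EFin \o (fun x => B * (x ^+ 2 * phi x))).
Proof.
have H := integrableZl measurableT B m2_int.
by apply: (eq_integrable _ _ _ _ H).
Qed.

Lemma dom_int A B : mu.-integrable setT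
   (EFin \o (fun x => A * phi x + B * (x ^+ 2 * phi x))).
Proof.
have H := integrableD measurableT (phiZ_int A) (m2Z_int B).
by apply: (eq_integrable _ _ _ _ H).
Qed.

Lemma dom_R A B : \int[mu]_x (A * phi x + B * (x ^+ 2 * phi x)) = A + B.
Proof.
rewrite RintegralD //; [|exact: phiZ_int|exact: m2Z_int].
by rewrite !RintegralZl // ?phi_R1 ?m2_R1 ?mulr1 //; [exact: phi_int|exact: m2_int].
Qed.

Lemma int_phi (G : R -> R) A B : continuous G ->
  (forall x, `|G x| <= A + B * x ^+ 2) ->
  mu.-integrable setT (EFin \o (fun x => phi x * G x)).
Proof.
move=> cG hG.
apply: (le_integrable _ _ _ (dom_int A B)) => //.
  apply/measurable_EFinP; apply: continuous_measurable_fun.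
  by move=> x; apply: continuousM; [exact: phi_cont|exact: cG].
move=> x _ /=; rewrite lee_fin normrM (ger0_norm (phi_ge0 x)).
apply: le_trans (ler_norm _).
have -> : A * phi x + B * (x ^+ 2 * phi x) = phi x * (A + B * x ^+ 2) by ring.
by apply: ler_wpM2l; [exact: phi_ge0|exact: hG].
Qed.

Lemma bound_phi (G : R -> R) A B : continuous G ->
  (forall x, `|G x| <= A + B * x ^+ 2) ->
  `|\int[mu]_x (phi x * G x)| <= A + B.
Proof.
move=> cG hG.
apply: le_trans (le_normr_Rintegral _ _) _ => //; first exact: int_phi cG hG.
rewrite -(dom_R A B).
apply: le_Rintegral => //.
- exact: (integrable_norm (int_phi cG hG)).
- exact: dom_int.
move=> x _; rewrite normrM (ger0_norm (phi_ge0 x)).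
have -> : A * phi x + B * (x ^+ 2 * phi x) = phi x * (A + B * x ^+ 2) by ring.
by apply: ler_wpM2l; [exact: phi_ge0|exact: hG].
Qed.

End OneD.

Section MultiD.
Context {R : realType}.
Notation mu := (@lebesgue_measure R).
Notation phi := (@normal_pdf R 0 1).

Lemma Rdom (f_ : nat -> R -> R) (f g : R -> R) :
  (forall n, measurable_fun setT (f_ n)) ->
  (forall x, f_ ^~ x @ \oo --> f x) ->
  mu.-integrable setT (EFin \o f) ->
  mu.-integrable setT (EFin \o g) ->
  (forall n x, `|f_ n x| <= g x) ->
  (fun n => \int[mu]_x f_ n x) @ \oo --> \int[mu]_x f x.
Proof.
move=> mf hf intf intg hb.
have H := (@dominated_cvg _ _ _ mu setT measurableT (fun n x => (f_ n x)%:E)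
   (EFin \o f) (EFin \o g)).
rewrite /Rintegral.
apply: (@fine_cvg _ _ _ _ (fun n => (\int[mu]_x (f_ n x)%:E)%E)).
rewrite fineK; last exact: integrable_fin_num.
apply: H => //.
- move=> n; apply: measurableT_comp => //; exact: mf.
- move=> x _; apply/fine_cvgP; split; first exact: nearW.
  exact: hf.
- by move=> n x _ /=; rewrite lee_fin.
Qed.


Definition sq n (w : nat -> R) := \sum_(k < n) w k ^+ 2.
Definition cns (x : R) (w : nat -> R) : nat -> R :=
  fun k => if k is k'.+1 then w k' else x.
Definition scont n (g : (nat -> R) -> R) :=
  forall (ws : nat -> nat -> R) (w : nat -> R),
  (forall k, (k < n)%N -> ws ^~ k @ \oo --> w k) ->
  (fun j => g (ws j)) @ \oo --> g w.

Lemma sq_ge0 n w : 0 <= sq n w.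
Proof. by apply: sumr_ge0 => i _; exact: sqr_ge0. Qed.

Lemma sqS n x w : sq n.+1 (cns x w) = x ^+ 2 + sq n w.
Proof.
by rewrite /sq big_ord_recl /=.
Qed.

Lemma sq0 w : sq 0 w = 0.
Proof. by rewrite /sq big_ord0. Qed.

Lemma cns_cvg n (xs : nat -> R) x (ws : nat -> nat -> R) w :
  xs @ \oo --> x -> (forall k, (k < n)%N -> ws ^~ k @ \oo --> w k) ->
  forall k, (k < n.+1)%N -> (fun j => cns (xs j) (ws j)) ^~ k @ \oo --> cns x w k.
Proof. by move=> hx hw [|k] hk //=; exact: hw. Qed.

Lemma scont_cns n (g : (nat -> R) -> R) x : scont n.+1 g -> scont n (fun w => g (cns x w)).
Proof.
move=> sg ws w hw; apply: (sg (fun j => cns x (ws j)) (cns x w)).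
exact: (cns_cvg (cvg_cst x) hw).
Qed.

Lemma bound_cns n (g : (nat -> R) -> R) A B x : 0 <= B ->
  (forall w, `|g w| <= A + B * sq n.+1 w) ->
  forall w, `|g (cns x w)| <= (A + B * x ^+ 2) + B * sq n w.
Proof.
move=> B0 hg w; apply: (le_trans (hg _)); rewrite sqS.
by rewrite mulrDr addrA.
Qed.

Definition KB n := forall (g : (nat -> R) -> R) A B, scont n g -> 0 <= B ->
  (forall w, `|g w| <= A + B * sq n w) -> `|gaussE_rec n g| <= A + B * n%:R.

Definition KC n := forall (gs : nat -> (nat -> R) -> R) (g : (nat -> R) -> R) A B,
  (forall m, scont n (gs m)) -> scont n g -> 0 <= B ->
  (forall m w, `|gs m w| <= A + B * sq n w) ->
  (forall w, `|g w| <= A + B * sq n w) ->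
  (forall ws w, (forall k, (k < n)%N -> ws ^~ k @ \oo --> w k) ->
     (fun j => gs j (ws j)) @ \oo --> g w) ->
  (fun j => gaussE_rec n (gs j)) @ \oo --> gaussE_rec n g.

Lemma slice_cont n : KC n -> forall (g : (nat -> R) -> R) A B, scont n.+1 g -> 0 <= B ->
  (forall w, `|g w| <= A + B * sq n.+1 w) ->
  continuous (fun x => gaussE_rec n (fun w => g (cns x w))).
Proof.
move=> kc g A B sg B0 hg x.
apply/(@cvg_nbhsP _ R^o) => xs xsx.
have /pinfty_ex_gt0 [M M0 hM] := cvg_seq_bounded (cvgP _ xsx).
apply: (kc (fun j w => g (cns (xs j) w)) (fun w => g (cns x w))
   (A + B * (M ^+ 2 + x ^+ 2)) B).
- by move=> m; exact: scont_cns.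
- exact: scont_cns.
- exact: B0.
- move=> m w; apply: (le_trans (bound_cns (xs m) B0 hg w)).
  have hm : `|xs m| <= M by apply: hM.
  have : xs m ^+ 2 <= M ^+ 2.
    rewrite -real_normK ?num_real //.
    by rewrite lerXn2r // ?nnegrE // ltW.
  move=> h; rewrite lerD2r lerD2l; apply: ler_wpM2l => //.
  by rewrite (le_trans h) // lerDl sqr_ge0.
- move=> w; apply: (le_trans (bound_cns x B0 hg w)).
  rewrite lerD2r lerD2l; apply: ler_wpM2l => //.
  by rewrite lerDr sqr_ge0.
- move=> ws w hw; apply: sg; exact: cns_cvg.
Qed.


Lemma slice_bound n : KB n -> forall (g : (nat -> R) -> R) A B, scont n.+1 g -> 0 <= B ->
  (forall w, `|g w| <= A + B * sq n.+1 w) ->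
  forall x, `|gaussE_rec n (fun w => g (cns x w))| <= (A + B * n%:R) + B * x ^+ 2.
Proof.
move=> kb g A B sg B0 hg x.
apply: (le_trans (kb _ (A + B * x ^+ 2) B (scont_cns (x:=x) sg) B0 (bound_cns x B0 hg))).
by rewrite -!addrA lerD2l addrC.
Qed.

Lemma gE_S n (g : (nat -> R) -> R) : gaussE_rec n.+1 g =
  \int[mu]_x (phi x * gaussE_rec n (fun w => g (cns x w))).
Proof. by []. Qed.

Lemma keyBC n : KB n /\ KC n.
Proof.
elim: n => [|n [IHB IHC]].
  split.
    move=> g A B _ _ hg /=; have := hg (fun=> 0).
    by rewrite sq0 !mulr0.
  move=> gs g A B _ _ _ _ _ hj /=.
  by apply: (hj (fun _ _ => 0) (fun _ => 0)) => k; rewrite ltn0.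
split.
  move=> g A B sg B0 hg; rewrite gE_S.
  apply: le_trans (bound_phi (slice_cont IHC sg B0 hg) (slice_bound IHB sg B0 hg)) _.
  by rewrite -natr1 mulrDr mulr1 addrA.
move=> gs g A B sgs sg B0 hgs hg hj.
have -> : (fun j => gaussE_rec n.+1 (gs j)) =
   (fun j => \int[mu]_x (phi x * gaussE_rec n (fun w => gs j (cns x w)))) by [].
rewrite gE_S.
apply: (Rdom (g := fun x => (A + B * n%:R) * phi x + B * (x ^+ 2 * phi x))).
- move=> j; apply: continuous_measurable_fun => x.
  apply: continuousM; first exact: phi_cont.
  exact: (slice_cont IHC (sgs j) B0 (hgs j)).
- move=> x; apply: cvgMr.
  apply: (IHC _ _ (A + B * x ^+ 2) B).
  + by move=> m; exact: scont_cns.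
  + exact: scont_cns.
  + exact: B0.
  + by move=> m; exact: bound_cns.
  + exact: bound_cns.
  + move=> ws w hw; apply: hj; exact: (cns_cvg (cvg_cst x) hw).
- exact: int_phi (slice_cont IHC sg B0 hg) (slice_bound IHB sg B0 hg).
- exact: dom_int.
- move=> j x; rewrite normrM (ger0_norm (phi_ge0 x)).
  have -> : (A + B * n%:R) * phi x + B * (x ^+ 2 * phi x) =
    phi x * ((A + B * n%:R) + B * x ^+ 2) by ring.
  apply: ler_wpM2l; first exact: phi_ge0.
  exact: (slice_bound IHB (sgs j) B0 (hgs j)).
Qed.


Definition good n (g : (nat -> R) -> R) :=
  scont n g /\ exists A B, 0 <= B /\ forall w, `|g w| <= A + B * sq n w.

Lemma good_cns n (g : (nat -> R) -> R) x : good n.+1 g -> good n (fun w => g (cns x w)).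
Proof.
move=> [sg [A [B [B0 hg]]]]; split; first exact: scont_cns.
by exists (A + B * x ^+ 2), B; split => //; exact: bound_cns.
Qed.

Lemma good_lin n (f g : (nat -> R) -> R) a b : good n f -> good n g ->
  good n (fun w => a * f w + b * g w).
Proof.
move=> [sf [A1 [B1 [B10 hf]]]] [sg [A2 [B2 [B20 hg]]]]; split.
  move=> ws w hw; apply: cvgD; apply: cvgMr; [exact: sf|exact: sg].
exists (`|a| * A1 + `|b| * A2), (`|a| * B1 + `|b| * B2); split.
  by rewrite addr_ge0 // mulr_ge0.
move=> w; apply: (le_trans (ler_normD _ _)); rewrite !normrM.
apply: (le_trans (lerD (ler_wpM2l (normr_ge0 a) (hf w)) (ler_wpM2l (normr_ge0 b) (hg w)))).
by rewrite le_eqVlt; apply/orP; left; apply/eqP; ring.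
Qed.

Lemma slice_int n (g : (nat -> R) -> R) : good n.+1 g ->
  mu.-integrable setT (EFin \o (fun x => phi x * gaussE_rec n (fun w => g (cns x w)))).
Proof.
move=> [sg [A [B [B0 hg]]]].
have [kb kc] := keyBC n.
exact: int_phi (slice_cont kc sg B0 hg) (slice_bound kb sg B0 hg).
Qed.

Lemma intZ (h : R -> R) a : mu.-integrable setT (EFin \o h) ->
  mu.-integrable setT (EFin \o (fun x => a * h x)).
Proof.
move=> ih; have H := integrableZl measurableT a ih.
by apply: (eq_integrable _ _ _ _ H).
Qed.

Lemma lin n : forall (f g : (nat -> R) -> R) a b, good n f -> good n g ->
  gaussE_rec n (fun w => a * f w + b * g w) = a * gaussE_rec n f + b * gaussE_rec n g.
Proof.
elim: n => [//|n IH] f g a b gf gg.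
rewrite !gE_S.
transitivity (\int[mu]_x (a * (phi x * gaussE_rec n (fun w => f (cns x w))) +
                          b * (phi x * gaussE_rec n (fun w => g (cns x w))))).
  apply: eq_Rintegral => x _.
  rewrite (IH (fun w => f (cns x w)) (fun w => g (cns x w))); last 2 first.
  - exact: good_cns.
  - exact: good_cns.
  by ring.
rewrite RintegralD //; [|exact: intZ (slice_int gf)|exact: intZ (slice_int gg)].
by rewrite !RintegralZl //; [exact: slice_int gg|exact: slice_int gf].
Qed.

Lemma good0 n : good n (fun _ => 0).
Proof.
split; first by move=> ws w _; exact: cvg_cst.
by exists 0, 0; split => // w; rewrite normr0 mul0r addr0.
Qed.

Lemma gE0 n : gaussE_rec n (fun _ => 0 : R) = 0.
Proof.
have := lin (0:R) 0 (good0 n) (good0 n).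
have -> : (fun _ : nat -> R => 0 * 0 + 0 * 0) = (fun _ => 0 : R).
  by apply/funext => w; rewrite mul0r addr0.
by rewrite !mul0r addr0.
Qed.

Lemma gE_sum n (I : Type) (s : seq I) (F : I -> (nat -> R) -> R) :
  (forall i, good n (F i)) ->
  good n (fun w => \sum_(i <- s) F i w) /\
  gaussE_rec n (fun w => \sum_(i <- s) F i w) = \sum_(i <- s) gaussE_rec n (F i).
Proof.
move=> gF; elim: s => [|i s [gs es]].
  have -> : (fun w => \sum_(i <- [::]) F i w) = (fun _ => 0 : R).
    by apply/funext => w; rewrite big_nil.
  by rewrite big_nil; split; [exact: good0|exact: gE0].
have -> : (fun w => \sum_(j <- i :: s) F j w) =
   (fun w => 1 * F i w + 1 * \sum_(j <- s) F j w).
  by apply/funext => w; rewrite big_cons !mul1r.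
split; first exact: good_lin.
by rewrite lin // big_cons !mul1r es.
Qed.

End MultiD.

Section Norms.
Context {R : realType}.

Lemma en_ge0 n (x : 'rV[R]_n) : 0 <= eucl_norm x.
Proof. exact: sqrtr_ge0. Qed.

Lemma en_sq n (x : 'rV[R]_n) : eucl_norm x ^+ 2 = \sum_(i < n) x ord0 i ^+ 2.
Proof. by rewrite /eucl_norm sqr_sqrtr // sumr_ge0 // => i _; exact: sqr_ge0. Qed.

Lemma en_scale n (c : R) (x : 'rV[R]_n) : eucl_norm (c *: x) = `|c| * eucl_norm x.
Proof.
rewrite /eucl_norm -sqrtr_sqr -sqrtrM ?sqr_ge0 //; congr Num.sqrt.
rewrite mulr_sumr; apply: eq_bigr => i _; rewrite mxE; ring.
Qed.

Lemma en_coord n (x : 'rV[R]_n) i : `|x ord0 i| <= eucl_norm x.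
Proof.
rewrite /eucl_norm -sqrtr_sqr ler_sqrt ?sumr_ge0 // => [|j _]; last exact: sqr_ge0.
rewrite (bigD1 i) //= lerDl sumr_ge0 // => j _; exact: sqr_ge0.
Qed.

Lemma sq_sum_le (I : Type) (s : seq I) (f : I -> R) :
  \sum_(i <- s) f i ^+ 2 <= (\sum_(i <- s) `|f i|) ^+ 2.
Proof.
elim: s => [|i s IH]; first by rewrite !big_nil expr0n.
rewrite !big_cons.
have h0 : 0 <= \sum_(j <- s) `|f j| by apply: sumr_ge0 => j _.
have hn : f i ^+ 2 = `|f i| ^+ 2 by rewrite real_normK // num_real.
have hf : 0 <= `|f i| by [].
rewrite hn; nra.
Qed.

Lemma en_le_sum n (x : 'rV[R]_n) : eucl_norm x <= \sum_(i < n) `|x ord0 i|.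
Proof.
have h0 : 0 <= \sum_(i < n) `|x ord0 i| by apply: sumr_ge0 => i _.
rewrite -(ger0_norm h0) -sqrtr_sqr ler_sqrt ?sqr_ge0 //.
exact: sq_sum_le.
Qed.

Lemma CS n (a b : 'I_n -> R) :
  (\sum_i a i * b i) ^+ 2 <= (\sum_i a i ^+ 2) * (\sum_i b i ^+ 2).
Proof.
have H : 0 <= \sum_(i < n) \sum_(j < n) (a i * b j - a j * b i) ^+ 2.
  by apply: sumr_ge0 => i _; apply: sumr_ge0 => j _; exact: sqr_ge0.
have E : \sum_(i < n) \sum_(j < n) (a i * b j - a j * b i) ^+ 2 =
   \sum_(i < n) \sum_(j < n) (a i ^+ 2 * b j ^+ 2) +
   \sum_(i < n) \sum_(j < n) (b i ^+ 2 * a j ^+ 2) -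
   2 * \sum_(i < n) \sum_(j < n) (a i * b i * (a j * b j)).
  rewrite mulr_sumr -big_split -sumrB /=; apply: eq_bigr => i _.
  rewrite mulr_sumr -big_split -sumrB /=; apply: eq_bigr => j _.
  ring.
move: H; rewrite E -!big_distrlr /= => H.
rewrite expr2; lra.
Qed.

End Norms.

Section Main.
Variables (R : realType) (d : nat) (F : 'rV[R]_d -> R) (L0 : R).
Hypothesis HF : forall t1 t2 : 'rV[R]_d, `|F t1 - F t2| <= L0 * eucl_norm (t1 - t2).
Variable theta : 'rV[R]_d.

Lemma cvg_sum_seq (I : Type) (s : seq I) (u : I -> nat -> R) (l : I -> R) :
  (forall i, u i @ \oo --> l i) ->
  (fun j => \sum_(i <- s) u i j) @ \oo --> \sum_(i <- s) l i.
Proof.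
move=> hu; elim: s => [|i s IH].
  have -> : (fun j => \sum_(i <- [::]) u i j) = (fun=> 0).
    by apply/funext => j; rewrite big_nil.
  by rewrite big_nil; exact: cvg_cst.
have -> : (fun j => \sum_(k <- i :: s) u k j) =
   (fun j => u i j + \sum_(k <- s) u k j).
  by apply/funext => j; rewrite big_cons.
by rewrite big_cons; apply: cvgD.
Qed.

Lemma cvg_lin0 (l c : R) (e : nat -> R) : e @ \oo --> 0 ->
  (fun j => l + c * e j) @ \oo --> l.
Proof.
move=> he; rewrite -[X in _ --> X]addr0 -[X in _ --> _ + X](mulr0 c).
apply: cvgD; first exact: cvg_cst.
exact: cvgMr.
Qed.

Definition rw (w : nat -> R) : 'rV[R]_d := \row_(i < d) w (nat_of_ord i).
Definition hh eta w := (F (theta + eta *: rw w) - F theta) / eta.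
Definition ff eta (i : 'I_d) w := hh eta w * (rw w) ord0 i.

Lemma rw_coord w i : (rw w) ord0 i = w i.
Proof. by rewrite mxE. Qed.

Lemma en_rw w : eucl_norm (rw w) ^+ 2 = sq d w.
Proof. by rewrite en_sq /sq; apply: eq_bigr => i _; rewrite mxE. Qed.

Lemma hh_bound eta w : 0 < eta -> `|hh eta w| <= L0 * eucl_norm (rw w).
Proof.
move=> e0; rewrite /hh normrM normrV ?unitfE ?gt_eqF // (gtr0_norm e0).
rewrite ler_pdivrMr //.
apply: (le_trans (HF _ _)).
have -> : theta + eta *: rw w - theta = eta *: rw w by rewrite addrC addKr.
by rewrite en_scale (gtr0_norm e0) le_eqVlt; apply/orP; left; apply/eqP; ring.
Qed.

Lemma F_cvg eta (ws : nat -> nat -> R) w :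
  (forall k, (k < d)%N -> ws ^~ k @ \oo --> w k) ->
  (fun j => F (theta + eta *: rw (ws j))) @ \oo --> F (theta + eta *: rw w).
Proof.
move=> hw.
set l := F (theta + eta *: rw w).
pose e j := eucl_norm (theta + eta *: rw (ws j) - (theta + eta *: rw w)).
have he : e @ \oo --> 0.
  apply: (@squeeze_cvgr _ _ _ _ (fun=> 0)
     (fun j => \sum_(i < d) `|(theta + eta *: rw (ws j) - (theta + eta *: rw w)) ord0 i|)).
  - by apply: nearW => j; rewrite en_ge0 en_le_sum.
  - exact: cvg_cst.
  - have H : (fun j => \sum_(i < d) `|(theta + eta *: rw (ws j) - (theta + eta *: rw w)) ord0 i|) @ \oo --> \sum_(i < d) (0:R).
      apply: cvg_sum_seq => i.
      have -> : (fun j => `|(theta + eta *: rw (ws j) - (theta + eta *: rw w)) ord0 i|) =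
         (fun j => `|theta ord0 i + eta * ws j i - (theta ord0 i + eta * w i)|).
        by apply/funext => j; rewrite !mxE.
      have -> : (0:R) = `|theta ord0 i + eta * w i - (theta ord0 i + eta * w i)|.
        by rewrite subrr normr0.
      apply: cvg_norm; apply: cvgB; last exact: cvg_cst.
      apply: cvgD; first exact: cvg_cst.
      apply: cvgMr; exact: hw (ltn_ord i).
    by rewrite big1_eq in H.
apply: (@squeeze_cvgr _ _ _ _ (fun j => l + (- L0) * e j) (fun j => l + L0 * e j)).
- apply: nearW => j.
  have := HF (theta + eta *: rw (ws j)) (theta + eta *: rw w).
  rewrite -/l -/(e j) ler_norml => /andP[h1 h2].
  apply/andP; split; lra.
- exact: cvg_lin0.
- exact: cvg_lin0.
Qed.


Lemma hh_diff eta1 eta2 w : 0 < eta1 -> 0 < eta2 ->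
  `|hh eta2 w - hh eta1 w| <= 2 * L0 * `|eta2 - eta1| / eta2 * eucl_norm (rw w).
Proof.
move=> e1 e2.
set N := eucl_norm (rw w).
set F2 := F (theta + eta2 *: rw w); set F1 := F (theta + eta1 *: rw w).
set F0 := F theta.
have t1 : `|F2 - F1| <= L0 * (`|eta2 - eta1| * N).
  apply: le_trans (HF _ _) _.
  have -> : theta + eta2 *: rw w - (theta + eta1 *: rw w) = (eta2 - eta1) *: rw w.
    by rewrite scalerBl opprD addrACA subrr add0r.
  by rewrite en_scale.
have t2 : `|F1 - F0| <= L0 * (eta1 * N).
  apply: le_trans (HF _ _) _.
  have -> : theta + eta1 *: rw w - theta = eta1 *: rw w by rewrite addrC addKr.
  by rewrite en_scale (gtr0_norm e1).
have E : hh eta2 w - hh eta1 w =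
   (F2 - F1) * eta2^-1 + (F1 - F0) * ((eta1 - eta2) / (eta1 * eta2)).
  rewrite /hh -/F2 -/F1 -/F0; field.
  by rewrite !gt_eqF.
rewrite E; apply: le_trans (ler_normD _ _) _.
have k0 : 0 <= `|eta2 - eta1| / (eta1 * eta2).
  by rewrite divr_ge0 // mulr_ge0 // ltW.
rewrite !normrM normrV ?unitfE ?gt_eqF // (gtr0_norm e2).
have p : 0 <= (eta1 * eta2)^-1 by rewrite invr_ge0 mulr_ge0 // ltW.
rewrite (ger0_norm p) [`|eta1 - eta2|]distrC.
apply: le_trans (lerD (ler_wpM2r _ t1) (ler_wpM2r k0 t2)) _.
  by rewrite invr_ge0 ltW.
rewrite le_eqVlt; apply/orP; left; apply/eqP.
field; by rewrite !gt_eqF.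
Qed.


Lemma ff_good eta i : 0 < eta -> 0 <= L0 -> good d (ff eta i).
Proof.
move=> e0 L00; split.
  move=> ws w hw; rewrite /ff.
  apply: cvgM.
    rewrite /hh; apply: cvgM; last exact: cvg_cst.
    apply: cvgB; last exact: cvg_cst.
    exact: F_cvg.
  have -> : (fun j => rw (ws j) ord0 i) = ws ^~ i by apply/funext => j; rewrite mxE.
  rewrite mxE; exact: hw (ltn_ord i).
exists 0, L0; split => // w.
rewrite add0r /ff normrM.
apply: le_trans (ler_pM (normr_ge0 _) (normr_ge0 _) (hh_bound w e0) (en_coord _ i)) _.
by rewrite -mulrA -expr2 en_rw.
Qed.

Lemma cs_rw (a : 'rV[R]_d) (w : nat -> R) :
  `|\sum_(i < d) a ord0 i * w i| <= eucl_norm a * eucl_norm (rw w).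
Proof.
have h0 : 0 <= eucl_norm a * eucl_norm (rw w) by rewrite mulr_ge0 // en_ge0.
rewrite -(ger0_norm h0) -!sqrtr_sqr ler_sqrt ?sqr_ge0 //.
rewrite exprMn !en_sq.
have -> : \sum_(i < d) rw w ord0 i ^+ 2 = \sum_(i < d) w i ^+ 2.
  by apply: eq_bigr => i _; rewrite mxE.
exact: CS.
Qed.

Lemma main_sec eta1 eta2 : 0 < eta1 -> 0 < eta2 ->
  eucl_norm (smooth_grad F eta2 theta - smooth_grad F eta1 theta)
    <= 2 * L0 * d%:R * `|eta2 - eta1| / eta2.
Proof.
move=> h1 h2.
have [d0|dpos] := posnP d.
  rewrite /eucl_norm.
  have -> : \sum_(i < d) (smooth_grad F eta2 theta - smooth_grad F eta1 theta) ord0 i ^+ 2 = 0.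
    by apply: big1 => i; have := ltn_ord i; rewrite {2}d0.
  by rewrite sqrtr0 d0 mulr0 !mul0r.
have L00 : 0 <= L0.
  pose i0 := Ordinal dpos.
  have := HF 0 (const_mx 1).
  have hN : 0 < eucl_norm (0 - const_mx 1 : 'rV[R]_d).
    apply: lt_le_trans (en_coord _ i0).
    by rewrite !mxE sub0r normrN normr1.
  by move/(le_trans (normr_ge0 _)); rewrite pmulr_lge0.
set a := smooth_grad F eta2 theta - smooth_grad F eta1 theta.
set c := 2 * L0 * `|eta2 - eta1| / eta2.
have c0 : 0 <= c by rewrite /c divr_ge0 ?mulr_ge0 // ltW.
have Ea i : a ord0 i = gaussE_rec d (ff eta2 i) - gaussE_rec d (ff eta1 i).
  by rewrite !mxE.
pose G i w := a ord0 i * ff eta2 i w + (- a ord0 i) * ff eta1 i w.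
have gG i : good d (G i) by apply: good_lin; apply: ff_good.
have [gH EH] := gE_sum (index_enum 'I_d) gG.
have E1 : gaussE_rec d (fun w => \sum_(i <- index_enum 'I_d) G i w) = eucl_norm a ^+ 2.
  rewrite EH en_sq; apply: eq_bigr => i _.
  rewrite /G lin; [|exact: ff_good|exact: ff_good].
  move: (Ea i) => Ei; rewrite Ei.
  ring.
have Hb : forall w, `|\sum_(i <- index_enum 'I_d) G i w| <= 0 + (c * eucl_norm a) * sq d w.
  move=> w.
  have -> : \sum_(i <- index_enum 'I_d) G i w =
     (hh eta2 w - hh eta1 w) * \sum_(i < d) (a ord0 i * w i).
    rewrite mulr_sumr; apply: eq_bigr => i _; rewrite /G /ff rw_coord; ring.
  rewrite normrM add0r.
  apply: le_trans (ler_pM (normr_ge0 _) (normr_ge0 _) (hh_diff w h1 h2) (cs_rw a w)) _.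
  rewrite -en_rw le_eqVlt; apply/orP; left; apply/eqP; rewrite /c; ring.
have cN0 : 0 <= c * eucl_norm a by rewrite mulr_ge0 // en_ge0.
have := (keyBC d).1 _ 0 (c * eucl_norm a) gH.1 cN0 Hb.
rewrite E1 add0r ger0_norm ?sqr_ge0 // => hk.
have hN := en_ge0 a.
have -> : 2 * L0 * d%:R * `|eta2 - eta1| / eta2 = c * d%:R by rewrite /c; ring.
have hd : 0 <= d%:R :> R by [].
move: hk; set N := eucl_norm a; set D := d%:R => hk.
have [N0|Np] := eqVneq N 0; first by rewrite N0 mulr_ge0.
have Npos : 0 < N by rewrite lt_neqAle eq_sym Np hN.
rewrite -(ler_pM2l Npos); move: hk; rewrite expr2.
by have -> : c * N * D = N * (c * D) by ring.
Qed.

End Main.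


Theorem lemma2 (R : realType) (d : nat) (F : 'rV[R]_d -> R) (L0 : R)
  (HF : forall t1 t2 : 'rV[R]_d, `|F t1 - F t2| <= L0 * eucl_norm (t1 - t2))
  (eta1 eta2 : R) (h1 : 0 < eta1) (h2 : 0 < eta2) (theta : 'rV[R]_d) :
  eucl_norm (smooth_grad F eta2 theta - smooth_grad F eta1 theta)
    <= 2 * L0 * d%:R * `|eta2 - eta1| / eta2.
Proof. exact: (main_sec HF theta h1 h2). Qed.
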